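(* For all $\lambda>0$ and all $0<x<\pi/2$, \[ \left|\int_0^x \frac{e^{it\lambda}}{\cos t}\,dt-\frac{i}{\lambda}\right|<\frac{1}{\lambda}-M(\lambda)+M(\lambda\cos x). \]
   Context: For $t>0$, $M(t)=\int_0^\infty \frac{e^{-tu}}{\sqrt{u^2+1}}\,du$. *)

(* Defs.v *)
From Stdlib Require Import Reals.
From Coquelicot Require Import Coquelicot.
Open Scope R_scope.

Definition M (t : R) : R :=
  RInt_gen (fun u => exp (- t * u) / sqrt (u ^ 2 + 1)) (at_point 0) (Rbar_locally p_infty).

Definition cexpi (theta : R) : C := (cos theta, sin theta).

Definition J (lam x : R) : C :=
  RInt (V := C_R_CompleteNormedModule) (fun t => scal (/ cos t) (cexpi (t * lam))) 0 x.

(* Main.v *)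
Require Import Defs.
From Stdlib Require Import Reals Lra Psatz.
From Coquelicot Require Import Coquelicot.
Open Scope R_scope.

Lemma Rabs_ball (a b e : R) : ball a e b <-> Rabs (b - a) < e.
Proof. unfold ball; simpl; unfold AbsRing_ball, abs, minus, plus, opp; simpl. tauto. Qed.

Lemma exd_cont (f : R -> R) x : ex_derive f x -> continuous f x.
Proof. intros H. apply (ex_derive_continuous f x H). Qed.

Lemma exR_cont (f : R -> R) a b :
  (forall z, Rmin a b <= z <= Rmax a b -> continuous f z) -> ex_RInt f a b.
Proof. intros H. apply (ex_RInt_continuous (V:=R_CompleteNormedModule) f a b H). Qed.

Lemma exp_int (t u v : R) : t <> 0 ->
  is_RInt (fun s => exp (- t * s)) u v ((exp (- t * u) - exp (- t * v)) / t).
Proof.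
  intros Ht.
  replace ((exp (- t * u) - exp (- t * v)) / t) with
     (minus ((fun s => - exp (- t * s) / t) v) ((fun s => - exp (- t * s) / t) u)).
  2:{ unfold minus, plus, opp; simpl. field. auto. }
  apply (is_RInt_derive (fun s => - exp (- t * s) / t) (fun s => exp (- t * s))).
  - intros s _. auto_derive. auto. field. auto.
  - intros s _. apply exd_cont. auto_derive. auto.
Qed.

Definition fM (t : R) := fun u => exp (- t * u) / sqrt (u ^ 2 + 1).

Lemma fM_cont t u : continuous (fM t) u.
Proof. apply exd_cont. unfold fM. auto_derive.
  split. nra. split. apply Rgt_not_eq, sqrt_lt_R0. nra. auto. Qed.

Lemma fM_ex t a b : ex_RInt (fM t) a b.
Proof. apply exR_cont. intros; apply fM_cont. Qed.

Lemma sqrt_ge1 u : 1 <= sqrt (u ^ 2 + 1).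
Proof. rewrite <- sqrt_1 at 1. apply sqrt_le_1_alt. nra. Qed.

Lemma fM_pos t u : 0 <= fM t u.
Proof. unfold fM. pose proof (sqrt_ge1 u). pose proof (exp_pos (-t*u)).
  apply Rmult_le_pos. lra. apply Rlt_le, Rinv_0_lt_compat. lra. Qed.

Lemma fM_le t u : fM t u <= exp (- t * u).
Proof. unfold fM. pose proof (sqrt_ge1 u). pose proof (exp_pos (-t*u)).
  unfold Rdiv. rewrite <- (Rmult_1_r (exp (-t*u))) at 2.
  apply Rmult_le_compat_l. lra.
  apply Rle_trans with (/ 1). apply Rinv_le_contravar; lra. rewrite Rinv_1; lra. Qed.

Lemma Rplus_minus_l_aux (a b : R) : a + b - a = b.
Proof. ring. Qed.

Lemma Fdiff t (Ht : 0 < t) u v : u <= v ->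
  0 <= RInt (fM t) 0 v - RInt (fM t) 0 u <= exp (- t * u) / t.
Proof.
  intros Huv.
  rewrite <- (RInt_Chasles (fM t) 0 u v) by apply fM_ex.
  unfold plus; simpl.
  rewrite Rplus_minus_l_aux.
  split.
  - apply RInt_ge_0; auto. apply fM_ex. intros; apply fM_pos.
  - apply Rle_trans with (RInt (fun s => exp (- t * s)) u v).
    + apply RInt_le; auto. apply fM_ex. eexists; apply exp_int; lra.
      intros; apply fM_le.
    + rewrite (is_RInt_unique _ _ _ _ (exp_int t u v ltac:(lra))).
      pose proof (exp_pos (-t*v)).
      unfold Rdiv. apply Rmult_le_compat_r. apply Rlt_le, Rinv_0_lt_compat; lra. lra.
Qed.

Lemma F_lim t (Ht : 0 < t) :
  exists l, filterlim (fun b => RInt (fM t) 0 b) (Rbar_locally p_infty) (locally l).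
Proof.
  apply (filterlim_locally_cauchy (F := Rbar_locally p_infty)).
  intros eps. pose proof (cond_pos eps) as He.
  set (B0 := / (eps * t * t)).
  assert (HB0 : 0 < B0) by (unfold B0; apply Rinv_0_lt_compat; repeat apply Rmult_lt_0_compat; lra).
  assert (Hsmall : forall u, B0 < u -> exp (- t * u) / t < eps).
  { intros u Hu. rewrite Ropp_mult_distr_l_reverse, exp_Ropp.
    assert (H1 : t * u < exp (t * u)).
    { pose proof (exp_ineq1 (t*u)). assert (t*u <> 0) by nra. specialize (H H0). lra. }
    assert (H2 : t * B0 < t * u) by nra.
    assert (H3: t * (t * B0) * eps = 1). { unfold B0. field. lra. }
    apply Rmult_lt_reg_r with (t * exp (t*u)). nra.
    replace (/ exp (t * u) / t * (t * exp (t * u))) with 1.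
    2:{ pose proof (exp_pos (t*u)). field. repeat split; lra. }
    assert (H4 : 0 < eps * t) by nra.
    assert (H5 : t * B0 < exp (t * u)) by lra.
    pose proof (Rmult_lt_compat_l _ _ _ H4 H5). nra. }
  exists (fun b => B0 < b). split.
  - exists B0. auto.
  - intros u v Hu Hv. apply Rabs_ball.
    destruct (Rle_dec u v) as [Huv|Huv].
    + pose proof (Fdiff t Ht u v Huv). specialize (Hsmall u Hu).
      rewrite Rabs_right by lra. lra.
    + assert (v <= u) by lra. pose proof (Fdiff t Ht v u H). specialize (Hsmall v Hv).
      rewrite Rabs_left1 by lra. lra.
Qed.

Lemma M_is t l : filterlim (fun b => RInt (fM t) 0 b) (Rbar_locally p_infty) (locally l) ->
  M t = l.
Proof.
  intros Hl. unfold M. apply is_RInt_gen_unique.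
  intros P HP. specialize (Hl P HP).
  apply Filter_prod with (fun a => a = 0) (fun b => P (RInt (fM t) 0 b)).
  - reflexivity.
  - exact Hl.
  - intros a b -> Hb. exists (RInt (fM t) 0 b). split; auto.
    simpl. apply (RInt_correct (fM t)). apply fM_ex.
Qed.

Lemma M_lim t (Ht : 0 < t) : forall eps, 0 < eps ->
  exists B0, forall b, B0 < b -> Rabs (RInt (fM t) 0 b - M t) < eps.
Proof.
  intros eps He. destruct (F_lim t Ht) as [l Hl].
  rewrite (M_is t l Hl).
  destruct (Hl (ball l (mkposreal eps He)) (locally_ball l _)) as [B0 HB].
  exists B0. intros b Hb. apply Rabs_ball. apply HB. auto.
Qed.

Definition ch y := (exp y + exp (- y)) / 2.
Definition sh y := (exp y - exp (- y)) / 2.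

Lemma exp_opp_mul y : exp y * exp (- y) = 1.
Proof. rewrite <- exp_plus. replace (y + - y) with 0 by ring. apply exp_0. Qed.

Lemma ch_sh y : ch y * ch y = 1 + sh y * sh y.
Proof. unfold ch, sh. pose proof (exp_opp_mul y). nra. Qed.

Lemma ch_ge1 y : 1 <= ch y.
Proof. unfold ch. pose proof (exp_opp_mul y). pose proof (exp_pos y). pose proof (exp_pos (-y)).
  assert (0 <= (exp y - 1)^2 * exp (-y)) by (apply Rmult_le_pos; [apply pow2_ge_0|lra]).
  nra. Qed.

Definition aa t y := cos t * ch y.
Definition bb t y := - (sin t * sh y).
Definition DD t y := aa t y * aa t y + bb t y * bb t y.
Definition iD t y := / DD t y.
Definition K1 t y := aa t y * iD t y.
Definition K2 t y := - (bb t y * iD t y).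
Definition E1 (l t y : R) := exp (- l * y) * cos (l * t).
Definition E2 (l t y : R) := exp (- l * y) * sin (l * t).
Definition P l t y := E1 l t y * K1 t y - E2 l t y * K2 t y.
Definition Q l t y := E1 l t y * K2 t y + E2 l t y * K1 t y.

Definition aat t y := - (sin t * ch y).
Definition bbt t y := - (cos t * sh y).
Definition DDt t y := 2 * (aa t y * aat t y + bb t y * bbt t y).
Definition iDt t y := - (DDt t y * iD t y * iD t y).
Definition K1t t y := aat t y * iD t y + aa t y * iDt t y.
Definition K2t t y := - (bbt t y * iD t y + bb t y * iDt t y).
Definition E1t l t y := - l * E2 l t y.
Definition E2t l t y := l * E1 l t y.
Definition Px l t y := E1t l t y * K1 t y + E1 l t y * K1t t y - (E2t l t y * K2 t y + E2 l t y * K2t t y).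
Definition Qx l t y := E1t l t y * K2 t y + E1 l t y * K2t t y + (E2t l t y * K1 t y + E2 l t y * K1t t y).

Lemma DD_eq t y : DD t y = cos t ^ 2 + sh y ^ 2.
Proof. unfold DD, aa, bb. pose proof (ch_sh y). pose proof (sin2_cos2 t). unfold Rsqr in H0. nra. Qed.

Lemma DD_pos t y : cos t <> 0 -> 0 < DD t y.
Proof. intros H. rewrite DD_eq. assert (0 < cos t ^ 2) by (apply pow2_gt_0; auto). nra. Qed.

Ltac solve_der := 
  unfold Px, Qx; unfold E1t, E2t, K1t, K2t, iDt; unfold DDt, aat, bbt;
  unfold P, Q, K1, K2, iD, E1, E2; unfold DD, aa, bb, ch, sh;
  auto_derive; [ repeat split; auto | field; intro H0; match goal with H : _ <> 0 |- _ => apply H; lra end ].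

Section Der.
Variables (l t y : R).
Hypothesis HD : DD t y <> 0.
Let HD' := HD.
Lemma dPt : is_derive (fun u => P l u y) t (Px l t y).
Proof. unfold DD, aa, bb, ch, sh in HD'. solve_der. Qed.
Lemma dQt : is_derive (fun u => Q l u y) t (Qx l t y).
Proof. unfold DD, aa, bb, ch, sh in HD'. solve_der. Qed.
Lemma dPy : is_derive (fun v => P l t v) y (- Qx l t y).
Proof. unfold DD, aa, bb, ch, sh in HD'. solve_der. Qed.
Lemma dQy : is_derive (fun v => Q l t v) y (Px l t y).
Proof. unfold DD, aa, bb, ch, sh in HD'. solve_der. Qed.
End Der.

Lemma cexp x : continuity_pt exp x.
Proof. apply derivable_continuous_pt, derivable_pt_exp. Qed.

Ltac c2d :=
  repeat (first [ apply continuity_2d_pt_plus | apply continuity_2d_pt_minus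
    | apply continuity_2d_pt_mult | apply continuity_2d_pt_opp
    | apply continuity_2d_pt_id1 | apply continuity_2d_pt_id2
    | apply continuity_2d_pt_const
    | (apply continuity_1d_2d_pt_comp; [apply continuity_cos|])
    | (apply continuity_1d_2d_pt_comp; [apply continuity_sin|])
    | (apply continuity_1d_2d_pt_comp; [apply cexp|]) ]).

Lemma c2_DD t y : continuity_2d_pt DD t y.
Proof. unfold DD, aa, bb, ch, sh, Rdiv. c2d. Qed.

Lemma c2_iD t y : DD t y <> 0 -> continuity_2d_pt iD t y.
Proof. intros H. unfold iD. apply continuity_2d_pt_inv; auto. apply c2_DD. Qed.

Ltac c2d' H := repeat (first [ apply (c2_iD _ _ H) | progress c2d ]).

Lemma c2_Px l t y : DD t y <> 0 -> continuity_2d_pt (Px l) t y.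
Proof. intros H.
  unfold Px, Qx; unfold E1t, E2t, K1t, K2t, iDt; unfold DDt, aat, bbt;
  unfold P, Q, K1, K2, E1, E2; unfold aa, bb, ch, sh, Rdiv.
  c2d' H. Qed.

Lemma c2_Qx l t y : DD t y <> 0 -> continuity_2d_pt (Qx l) t y.
Proof. intros H.
  unfold Px, Qx; unfold E1t, E2t, K1t, K2t, iDt; unfold DDt, aat, bbt;
  unfold P, Q, K1, K2, E1, E2; unfold aa, bb, ch, sh, Rdiv.
  c2d' H. Qed.

Lemma isd_plus (f g : R -> R) x df dg : is_derive f x df -> is_derive g x dg ->
  is_derive (fun u => f u + g u) x (df + dg).
Proof. intros. apply (is_derive_plus (K:=R_AbsRing) (V:=R_NormedModule)); auto. Qed.

Lemma isd_opp (f : R -> R) x df : is_derive f x df ->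
  is_derive (fun u => - f u) x (- df).
Proof. intros. apply (is_derive_opp (K:=R_AbsRing) (V:=R_NormedModule)); auto. Qed.

Lemma c2_cont2 f x y : continuity_2d_pt f x y -> continuous (fun v => f x v) y.
Proof.
  intros H P [eps HP]. destruct (H eps) as [d Hd].
  exists d. intros v Hv. apply HP. apply Rabs_ball. apply Hd.
  rewrite Rminus_eq_0, Rabs_R0. apply cond_pos. apply Rabs_ball. auto.
Qed.

Lemma exd_is (f : R -> R) x l : is_derive f x l -> ex_derive f x.
Proof. intros H; exists l; auto. Qed.

Section Main.
Variables (l x Y : R).
Hypotheses (Hx0 : 0 < x) (Hx1 : x < PI / 2) (HY : 0 < Y).

Definition del : posreal := mkposreal (PI / 2 - x) ltac:(lra).

Lemma cos_near X u : 0 <= X <= x -> Rabs (u - X) < del -> cos u <> 0.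
Proof. intros HX Hu. simpl in Hu. apply Rabs_def2 in Hu.
  apply Rgt_not_eq, cos_gt_0; lra. Qed.

Lemma DD_near X u v : 0 <= X <= x -> Rabs (u - X) < del -> DD u v <> 0.
Proof. intros. apply Rgt_not_eq, DD_pos. eapply cos_near; eauto. Qed.

Lemma DD_X X v : 0 <= X <= x -> DD X v <> 0.
Proof. intros. apply (DD_near X); auto. rewrite Rminus_eq_0, Rabs_R0. apply cond_pos. Qed.

Lemma DD_Y t : DD t Y <> 0.
Proof. apply Rgt_not_eq. rewrite DD_eq. 
  assert (0 < sh Y). { unfold sh. pose proof (exp_increasing (-Y) Y ltac:(lra)). lra. }
  pose proof (pow2_ge_0 (cos t)). nra. Qed.

Definition Phr X := RInt (fun y => P l X y) 0 Y.
Definition Phi X := RInt (fun y => Q l X y) 0 Y.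
Definition Er X := RInt (fun t => P l t Y) 0 X.
Definition Ei X := RInt (fun t => Q l t Y) 0 X.

Lemma contP_y X v : DD X v <> 0 -> continuous (fun y => P l X y) v.
Proof. intros H. apply exd_cont. eapply exd_is. apply dPy; auto. Qed.
Lemma contQ_y X v : DD X v <> 0 -> continuous (fun y => Q l X y) v.
Proof. intros H. apply exd_cont. eapply exd_is. apply dQy; auto. Qed.
Lemma contP_t X v : DD X v <> 0 -> continuous (fun t => P l t v) X.
Proof. intros H. apply exd_cont. eapply exd_is. apply dPt; auto. Qed.
Lemma contQ_t X v : DD X v <> 0 -> continuous (fun t => Q l t v) X.
Proof. intros H. apply exd_cont. eapply exd_is. apply dQt; auto. Qed.

Lemma dPhi X : 0 <= X <= x -> is_derive Phi X (P l X 0 - P l X Y).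
Proof.
  intros HX.
  assert (H := is_derive_RInt_param (fun u v => Q l u v) 0 Y X).
  unfold Phi.
  replace (P l X 0 - P l X Y) with (RInt (fun t => Derive (fun u => Q l u t) X) 0 Y).
  - apply H.
    + exists del. intros u Hu t _. apply Rabs_ball in Hu. eapply exd_is. apply dQt.
      eapply DD_near; eauto.
    + intros t _. apply continuity_2d_pt_ext_loc with (Qx l).
      * exists del. intros u v Hu _. symmetry. apply is_derive_unique. apply dQt.
        eapply DD_near; eauto.
      * apply c2_Qx. apply DD_X; auto.
    + exists del. intros u Hu. apply Rabs_ball in Hu. apply exR_cont. intros z _.
      apply contQ_y. eapply DD_near; eauto.
  - rewrite (RInt_ext _ (Qx l X)).
    2:{ intros t _. apply is_derive_unique. apply dQt. apply DD_X; auto. }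
    apply is_RInt_unique.
    replace (P l X 0 - P l X Y) with (minus ((fun v => - P l X v) Y) ((fun v => - P l X v) 0)).
    2:{ unfold minus, plus, opp; simpl. ring. }
    apply (is_RInt_derive (fun v => - P l X v) (Qx l X)).
    + intros v _. replace (Qx l X v) with (- - Qx l X v) by ring. apply isd_opp. apply dPy.
      apply DD_X; auto.
    + intros v _. apply c2_cont2. apply c2_Qx. apply DD_X; auto.
Qed.

Lemma dPhr X : 0 <= X <= x -> is_derive Phr X (Q l X Y - Q l X 0).
Proof.
  intros HX.
  assert (H := is_derive_RInt_param (fun u v => P l u v) 0 Y X).
  unfold Phr.
  replace (Q l X Y - Q l X 0) with (RInt (fun t => Derive (fun u => P l u t) X) 0 Y).
  - apply H.
    + exists del. intros u Hu t _. apply Rabs_ball in Hu. eapply exd_is. apply dPt.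
      eapply DD_near; eauto.
    + intros t _. apply continuity_2d_pt_ext_loc with (Px l).
      * exists del. intros u v Hu _. symmetry. apply is_derive_unique. apply dPt.
        eapply DD_near; eauto.
      * apply c2_Px. apply DD_X; auto.
    + exists del. intros u Hu. apply Rabs_ball in Hu. apply exR_cont. intros z _.
      apply contP_y. eapply DD_near; eauto.
  - rewrite (RInt_ext _ (Px l X)).
    2:{ intros t _. apply is_derive_unique. apply dPt. apply DD_X; auto. }
    apply is_RInt_unique.
    replace (Q l X Y - Q l X 0) with (minus ((fun v => Q l X v) Y) ((fun v => Q l X v) 0)).
    2:{ unfold minus, plus, opp; simpl. ring. }
    apply (is_RInt_derive (fun v => Q l X v) (Px l X)).
    + intros v _. apply dQy. apply DD_X; auto.
    + intros v _. apply c2_cont2. apply c2_Px. apply DD_X; auto.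
Qed.

Lemma dEr X : is_derive Er X (P l X Y).
Proof.
  apply (is_derive_RInt (fun t => P l t Y) Er 0 X).
  - exists del. intros b _. unfold Er. apply (RInt_correct (V:=R_CompleteNormedModule)).
    apply exR_cont. intros z _. apply contP_t, DD_Y.
  - apply contP_t, DD_Y.
Qed.

Lemma dEi X : is_derive Ei X (Q l X Y).
Proof.
  apply (is_derive_RInt (fun t => Q l t Y) Ei 0 X).
  - exists del. intros b _. unfold Ei. apply (RInt_correct (V:=R_CompleteNormedModule)).
    apply exR_cont. intros z _. apply contQ_t, DD_Y.
  - apply contQ_t, DD_Y.
Qed.

Lemma Q0 y : Q l 0 y = 0.
Proof. unfold Q, E1, E2, K1, K2, bb. rewrite Rmult_0_r, sin_0. ring. Qed.

Lemma Phi0 : Phi 0 = 0.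
Proof. unfold Phi. rewrite (RInt_ext _ (fun _ => 0)). 2:{ intros; apply Q0. }
  rewrite RInt_const. unfold scal; simpl. unfold mult; simpl. ring. Qed.

Lemma identA : is_RInt (fun t => P l t 0) 0 x (Phi x + Er x).
Proof.
  replace (Phi x + Er x) with (minus ((fun X => Phi X + Er X) x) ((fun X => Phi X + Er X) 0)).
  2:{ unfold minus, plus, opp; simpl. rewrite Phi0. unfold Er. rewrite RInt_point. 
      unfold zero; simpl. ring. }
  apply (is_RInt_derive (fun X => Phi X + Er X) (fun t => P l t 0)).
  - intros X HX. rewrite Rmin_left, Rmax_right in HX by lra.
    replace (P l X 0) with ((P l X 0 - P l X Y) + P l X Y) by ring.
    apply isd_plus. apply dPhi; auto. apply dEr.
  - intros X HX. rewrite Rmin_left, Rmax_right in HX by lra.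
    apply contP_t. apply DD_X; auto.
Qed.

Lemma identB : is_RInt (fun t => Q l t 0) 0 x (Phr 0 - Phr x + Ei x).
Proof.
  replace (Phr 0 - Phr x + Ei x) with
    (minus ((fun X => - Phr X + Ei X) x) ((fun X => - Phr X + Ei X) 0)).
  2:{ unfold minus, plus, opp; simpl. unfold Ei. rewrite RInt_point. 
      unfold zero; simpl. ring. }
  apply (is_RInt_derive (fun X => - Phr X + Ei X) (fun t => Q l t 0)).
  - intros X HX. rewrite Rmin_left, Rmax_right in HX by lra.
    replace (Q l X 0) with (- (Q l X Y - Q l X 0) + Q l X Y) by ring.
    apply isd_plus. apply isd_opp. apply dPhr; auto. apply dEi.
  - intros X HX. rewrite Rmin_left, Rmax_right in HX by lra.
    apply contQ_t. apply DD_X; auto.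
Qed.

End Main.

Lemma sqrt_facts a : 0 < a -> 0 < sqrt a /\ sqrt a * sqrt a = a.
Proof. intros. split. apply sqrt_lt_R0; auto. apply sqrt_sqrt; lra. Qed.

Lemma phi_mono c y s : 0 < c -> c ^ 2 <= 1 -> 0 <= y <= s ->
  / sqrt (s ^ 2 + c ^ 2) - / sqrt (s ^ 2 + 1) <= / sqrt (y ^ 2 + c ^ 2) - / sqrt (y ^ 2 + 1).
Proof.
  intros Hc Hc1 Hys.
  assert (Hc2 : 0 < c ^ 2) by (apply pow_lt; auto).
  destruct (sqrt_facts (s ^ 2 + c ^ 2)) as [Hp Hpp]. nra.
  destruct (sqrt_facts (s ^ 2 + 1)) as [Hq Hqq]. nra.
  destruct (sqrt_facts (y ^ 2 + c ^ 2)) as [Hp0 Hpp0]. nra.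
  destruct (sqrt_facts (y ^ 2 + 1)) as [Hq0 Hqq0]. nra.
  set (p := sqrt (s ^ 2 + c ^ 2)) in *. set (q := sqrt (s ^ 2 + 1)) in *.
  set (p0 := sqrt (y ^ 2 + c ^ 2)) in *. set (q0 := sqrt (y ^ 2 + 1)) in *.
  assert (Hpq : p <= q) by (unfold p, q; apply sqrt_le_1; nra).
  assert (Hp0q0 : p0 <= q0) by (unfold p0, q0; apply sqrt_le_1; nra).
  assert (Hpp' : p0 <= p) by (unfold p, p0; apply sqrt_le_1; nra).
  assert (Hqq' : q0 <= q) by (unfold q, q0; apply sqrt_le_1; nra).
  assert (E1' : (q - p) * (q + p) = (q0 - p0) * (q0 + p0)) by nra.
  assert (Hd : q - p <= q0 - p0) by nra.
  replace (/ p - / q) with ((q - p) / (p * q)) by (field; lra).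
  replace (/ p0 - / q0) with ((q0 - p0) / (p0 * q0)) by (field; lra).
  apply Rle_trans with ((q0 - p0) / (p * q)).
  - unfold Rdiv. apply Rmult_le_compat_r. apply Rlt_le, Rinv_0_lt_compat. nra. lra.
  - unfold Rdiv. apply Rmult_le_compat_l. lra. apply Rinv_le_contravar. nra. nra.
Qed.

Lemma phi_low c s : 0 < c -> c ^ 2 <= 1 -> 0 <= s ->
  (1 - c ^ 2) / (2 * (s + 1) ^ 3) <= / sqrt (s ^ 2 + c ^ 2) - / sqrt (s ^ 2 + 1).
Proof.
  intros Hc Hc1 Hs.
  assert (Hc2 : 0 < c ^ 2) by (apply pow_lt; auto).
  destruct (sqrt_facts (s ^ 2 + c ^ 2)) as [Hp Hpp]. nra.
  destruct (sqrt_facts (s ^ 2 + 1)) as [Hq Hqq]. nra.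
  set (p := sqrt (s ^ 2 + c ^ 2)) in *. set (q := sqrt (s ^ 2 + 1)) in *.
  assert (Hpq : p <= q) by (unfold p, q; apply sqrt_le_1; nra).
  assert (Hp1 : p <= s + 1) by nra.
  assert (Hq1 : q <= s + 1) by nra.
  replace (/ p - / q) with ((1 - c ^ 2) / (p * q * (p + q))).
  2:{ field_simplify_eq; [nra | repeat split; lra]. }
  unfold Rdiv. apply Rmult_le_compat_l. lra.
  apply Rinv_le_contravar. apply Rmult_lt_0_compat. nra. lra.
  assert (p * q <= (s+1) * (s+1)) by nra.
  replace (2 * (s + 1) ^ 3) with ((s+1)*(s+1) * (2 * (s + 1))) by ring.
  apply Rmult_le_compat; nra.
Qed.

Lemma sh_ge y : 0 <= y -> y <= sh y.
Proof.
  intros Hy.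
  assert (H : is_RInt (fun u => ch u - 1) 0 y (minus ((fun u => sh u - u) y) ((fun u => sh u - u) 0))).
  { apply (is_RInt_derive (fun u => sh u - u) (fun u => ch u - 1)).
    - intros u _. unfold sh, ch. auto_derive; auto. field.
    - intros u _. apply exd_cont. unfold ch. auto_derive. auto. }
  assert (0 <= RInt (fun u => ch u - 1) 0 y).
  { apply RInt_ge_0; auto. eexists; eauto. intros u _. pose proof (ch_ge1 u). lra. }
  rewrite (is_RInt_unique _ _ _ _ H) in H0. unfold minus, plus, opp in H0; simpl in H0.
  unfold sh in H0 at 2. rewrite Ropp_0, exp_0 in H0. lra.
Qed.

Lemma sh_pos y : 0 < y -> 0 < sh y.
Proof. intros. unfold sh. pose proof (exp_increasing (-y) y ltac:(lra)). lra. Qed.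

Lemma ch_sqrt y : ch y = sqrt (sh y ^ 2 + 1).
Proof. pose proof (ch_sh y). pose proof (ch_ge1 y).
  rewrite <- (sqrt_square (ch y)) by lra. f_equal. nra. Qed.

Lemma ch0 : ch 0 = 1.
Proof. unfold ch. rewrite Ropp_0, exp_0. field. Qed.
Lemma sh0 : sh 0 = 0.
Proof. unfold sh. rewrite Ropp_0, exp_0. field. Qed.

Lemma P_t0 l t : cos t <> 0 -> P l t 0 = / cos t * cos (t * l).
Proof. intros H. unfold P, E1, E2, K1, K2, iD, DD, aa, bb. rewrite ch0, sh0.
  rewrite Rmult_0_r, exp_0, (Rmult_comm t l). field; auto. Qed.

Lemma Q_t0 l t : cos t <> 0 -> Q l t 0 = / cos t * sin (t * l).
Proof. intros H. unfold Q, E1, E2, K1, K2, iD, DD, aa, bb. rewrite ch0, sh0.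
  rewrite Rmult_0_r, exp_0, (Rmult_comm t l). field; auto. Qed.

Lemma P_0y l y : P l 0 y = exp (- l * y) / ch y.
Proof. pose proof (ch_ge1 y). unfold P, E1, E2, K1, K2, iD, DD, aa, bb.
  rewrite Rmult_0_r, cos_0, sin_0. field. lra. Qed.

Lemma normPQ l t y : 0 < DD t y ->
  Cmod (P l t y, Q l t y) = exp (- l * y) / sqrt (DD t y).
Proof.
  intros HD. destruct (sqrt_facts _ HD) as [Hs Hss].
  pose proof (exp_pos (- l * y)).
  unfold Cmod; simpl. rewrite <- (sqrt_square (exp (- l * y) / sqrt (DD t y))).
  2:{ apply Rlt_le, Rdiv_lt_0_compat; auto. }
  f_equal.
  assert (E : P l t y * (P l t y * 1) + Q l t y * (Q l t y * 1) =
     (E1 l t y ^ 2 + E2 l t y ^ 2) * (K1 t y ^ 2 + K2 t y ^ 2)) by (unfold P, Q; ring).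
  rewrite E. clear E.
  assert (E : E1 l t y ^ 2 + E2 l t y ^ 2 = exp (- l * y) ^ 2).
  { unfold E1, E2. pose proof (sin2_cos2 (l * t)). unfold Rsqr in H0. nra. }
  rewrite E. clear E.
  assert (E : K1 t y ^ 2 + K2 t y ^ 2 = / DD t y).
  { unfold K1, K2, iD. unfold DD in *. field. lra. }
  rewrite E. set (r := sqrt (DD t y)) in *. rewrite <- Hss. field. lra.
Qed.

Definition gC l c v := exp (- l * v) / sqrt (v ^ 2 + c ^ 2).
Definition w l c v := gC l c v - fM l v.

Lemma gC_cont l c v : 0 < c -> continuous (gC l c) v.
Proof. intros Hc. apply exd_cont. unfold gC. auto_derive.
  assert (0 < c ^ 2) by (apply pow_lt; auto).
  split. nra. split. apply Rgt_not_eq, sqrt_lt_R0. nra. auto. Qed.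

Lemma gC_ex l c a b : 0 < c -> ex_RInt (gC l c) a b.
Proof. intros. apply exR_cont. intros; apply gC_cont; auto. Qed.

Lemma w_ex l c a b : 0 < c -> ex_RInt (w l c) a b.
Proof. intros. apply exR_cont. intros. unfold w.
  apply (continuous_minus (V:=R_NormedModule) (gC l c) (fM l)). apply gC_cont; auto. apply fM_cont. Qed.

Lemma RInt_w l c a b : 0 < c -> RInt (w l c) a b = RInt (gC l c) a b - RInt (fM l) a b.
Proof. intros Hc. unfold w. 
  apply is_RInt_unique. apply (is_RInt_minus (V:=R_NormedModule)).
  apply (RInt_correct (V:=R_CompleteNormedModule)); apply gC_ex; auto.
  apply (RInt_correct (V:=R_CompleteNormedModule)); apply fM_ex. Qed.

Lemma w_nonneg l c v : 0 < c -> c ^ 2 <= 1 -> 0 <= w l c v.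
Proof. intros Hc Hc1. unfold w, gC, fM.
  assert (0 < c ^ 2) by (apply pow_lt; auto).
  destruct (sqrt_facts (v ^ 2 + c ^ 2)) as [Hp _]. nra.
  assert (sqrt (v ^ 2 + c ^ 2) <= sqrt (v ^ 2 + 1)) by (apply sqrt_le_1; nra).
  pose proof (exp_pos (- l * v)).
  unfold Rdiv. rewrite <- Rmult_minus_distr_l. apply Rmult_le_pos. lra.
  assert (/ sqrt (v ^ 2 + 1) <= / sqrt (v ^ 2 + c ^ 2)) by (apply Rinv_le_contravar; auto).
  lra. Qed.

Lemma chvar l c b : 0 < c -> RInt (fM (l * c)) 0 b = RInt (gC l c) 0 (c * b).
Proof.
  intros Hc.
  assert (H := RInt_comp_lin (V:=R_CompleteNormedModule) (gC l c) c 0 0 b (gC_ex l c _ _ Hc)).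
  replace (c * 0 + 0) with 0 in H by ring. replace (c * b + 0) with (c * b) in H by ring.
  rewrite <- H. apply RInt_ext. intros v _.
  unfold scal; simpl; unfold mult; simpl. unfold gC, fM.
  replace ((c * v + 0) ^ 2 + c ^ 2) with (c * c * (v ^ 2 + 1)) by ring.
  rewrite sqrt_mult by nra. rewrite sqrt_square by lra.
  replace (- l * (c * v + 0)) with (- (l * c) * v) by ring.
  assert (0 < sqrt (v ^ 2 + 1)) by (apply sqrt_lt_R0; nra).
  field. lra.
Qed.

Lemma W_le_M l c B : 0 < l -> 0 < c -> c ^ 2 <= 1 -> 0 <= B ->
  RInt (w l c) 0 B <= M (l * c) - M l.
Proof.
  intros Hl Hc Hc1 HB.
  apply Rle_plus_epsilon. intros eps He.
  assert (He2 : 0 < eps / 2) by lra.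
  destruct (M_lim (l * c) (Rmult_lt_0_compat _ _ Hl Hc) _ He2) as [B1 HB1].
  destruct (M_lim l Hl _ He2) as [B2 HB2].
  set (b := Rmax B (Rmax B2 (c * B1)) + 1).
  assert (Hb1 : B < b) by (unfold b; pose proof (Rmax_l B (Rmax B2 (c * B1))); lra).
  assert (Hb2 : B2 < b) by (unfold b; pose proof (Rmax_r B (Rmax B2 (c * B1)));
     pose proof (Rmax_l B2 (c * B1)); lra).
  assert (Hb3 : c * B1 < b) by (unfold b; pose proof (Rmax_r B (Rmax B2 (c * B1)));
     pose proof (Rmax_r B2 (c * B1)); lra).
  assert (Hb4 : B1 < b / c).
  { apply Rmult_lt_reg_l with c; auto. replace (c * (b / c)) with b by (field; lra). lra. }
  specialize (HB1 _ Hb4). specialize (HB2 _ Hb2).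
  rewrite chvar in HB1 by auto. replace (c * (b / c)) with b in HB1 by (field; lra).
  apply Rabs_def2 in HB1. apply Rabs_def2 in HB2.
  assert (HW : RInt (w l c) 0 B <= RInt (w l c) 0 b).
  { rewrite <- (RInt_Chasles (w l c) 0 B b) by (apply w_ex; auto).
    unfold plus; simpl.
    assert (0 <= RInt (w l c) B b).
    { apply RInt_ge_0. lra. apply w_ex; auto. intros; apply w_nonneg; auto. }
    lra. }
  rewrite (RInt_w l c 0 b) in HW by auto. lra.
Qed.

Lemma exp4 Y : exp Y = exp (Y/4) ^ 4.
Proof. replace Y with (Y/4 + Y/4 + Y/4 + Y/4) at 1 by field. rewrite !exp_plus. ring. Qed.

Lemma sh_big Y : 0 < Y -> ((Y / 4) ^ 4 - 1) / 2 < sh Y.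
Proof. intros HY. unfold sh. rewrite exp4.
  pose proof (exp_ineq1 (Y/4) ltac:(lra)).
  pose proof (exp_increasing (-Y) 0 ltac:(lra)). rewrite exp_0 in H0.
  set (z := exp (Y/4)) in *.
  assert (0 < Y/4) by lra.
  assert ((Y/4)^4 < z^4).
  { assert (Y/4 < z) by lra. assert ((Y/4)*(Y/4) < z*z) by nra.
    replace ((Y/4)^4) with (((Y/4)*(Y/4))*((Y/4)*(Y/4))) by ring.
    replace (z^4) with ((z*z)*(z*z)) by ring. nra. }
  lra. Qed.

Lemma choose_Y K : 0 < K -> K * (4096 * K + 8 + 2) ^ 3 < sh (4096 * K + 8).
Proof.
  intros HK. set (Y := 4096 * K + 8).
  assert (HY : 8 <= Y) by (unfold Y; lra).
  apply Rle_lt_trans with (((Y / 4) ^ 4 - 1) / 2); [| apply sh_big; lra].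
  assert (HK' : K = (Y - 8) / 4096) by (unfold Y; field).
  rewrite HK'.
  assert (H1 : (Y + 2) ^ 3 <= 8 * Y ^ 3).
  { replace (8 * Y ^ 3) with ((2 * Y) ^ 3) by ring. apply pow_incr. lra. }
  assert (H2 : 512 <= Y ^ 3).
  { replace 512 with (8 ^ 3) by ring. apply pow_incr. lra. }
  assert (H3 : (Y - 8) * (Y + 2) ^ 3 <= (Y - 8) * (8 * Y ^ 3)).
  { apply Rmult_le_compat_l; lra. }
  replace ((Y / 4) ^ 4) with (Y * Y ^ 3 / 256) by field.
  nra.
Qed.

Theorem theorem5 (lam x : R) (Hlam : 0 < lam) (Hx0 : 0 < x) (Hx1 : x < PI / 2) :
  Cmod (Cminus (J lam x) (Ci * RtoC (/ lam))%C) < / lam - M lam + M (lam * cos x).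
Proof.
  set (c := cos x).
  assert (Hc : 0 < c) by (apply cos_gt_0; lra).
  assert (Hs : 0 < sin x) by (apply sin_gt_0; lra).
  assert (Hsc : sin x ^ 2 = 1 - c ^ 2) by (pose proof (sin2_cos2 x); unfold Rsqr in H; unfold c; nra).
  assert (Hc1 : c ^ 2 <= 1) by nra.
  set (K := 2 * x / (exp (- lam) * sin x ^ 2)).
  assert (HK : 0 < K).
  { unfold K. apply Rdiv_lt_0_compat. lra. apply Rmult_lt_0_compat. apply exp_pos. nra. }
  set (Y := 4096 * K + 8).
  assert (HY : 8 <= Y) by (unfold Y; lra).
  assert (HshY : K * (Y + 2) ^ 3 < sh Y) by (apply choose_Y; auto).
  assert (HshY0 : 0 < sh Y) by (apply sh_pos; lra).
  assert (HJ : J lam x = (Phi lam Y x + Er lam Y x, Phr lam Y 0 - Phr lam Y x + Ei lam Y x)).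
  { unfold J. apply (is_RInt_unique (V:=C_R_CompleteNormedModule)).
    apply is_RInt_ext with (fun t => (P lam t 0, Q lam t 0)).
    - intros t Ht. rewrite Rmin_left, Rmax_right in Ht by lra.
      assert (cos t <> 0) by (apply Rgt_not_eq, cos_gt_0; lra).
      rewrite P_t0, Q_t0 by auto. reflexivity.
    - apply (is_RInt_fct_extend_pair (U:=R_NormedModule) (V:=R_NormedModule)).
      + apply identA; lra.
      + apply identB; lra. }
  assert (HnC : forall z, @norm R_AbsRing C_R_NormedModule z = Cmod z)
    by (intros; rewrite Cmod_norm; reflexivity).
  assert (HDx : forall v, 0 < DD x v) by (intros; apply DD_pos; apply Rgt_not_eq; exact Hc).
  assert (B1 : Cmod (Phr lam Y x, Phi lam Y x) <= Phr lam Y 0 + RInt (w lam c) 0 Y).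
  { rewrite <- HnC.
    apply (norm_RInt_le (V:=C_R_NormedModule) (fun y => (P lam x y, Q lam x y))
      (fun y => P lam 0 y + w lam c y) 0 Y).
    - lra.
    - intros v Hv. rewrite HnC, normPQ by auto. rewrite DD_eq, P_0y.
      fold c. rewrite ch_sqrt. unfold w, gC, fM.
      pose proof (phi_mono c v (sh v) Hc Hc1 (conj (proj1 Hv) (sh_ge v (proj1 Hv)))).
      pose proof (exp_pos (- lam * v)).
      rewrite (Rplus_comm (c ^ 2)).
      unfold Rdiv. 
      replace (exp (- lam * v) * / sqrt (sh v ^ 2 + 1) +
        (exp (- lam * v) * / sqrt (v ^ 2 + c ^ 2) - exp (- lam * v) * / sqrt (v ^ 2 + 1)))
      with (exp (- lam * v) * (/ sqrt (sh v ^ 2 + 1) +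
        (/ sqrt (v ^ 2 + c ^ 2) - / sqrt (v ^ 2 + 1)))) by ring.
      apply Rmult_le_compat_l; lra.
    - apply (is_RInt_fct_extend_pair (U:=R_NormedModule) (V:=R_NormedModule)).
      + apply (RInt_correct (V:=R_CompleteNormedModule)). apply exR_cont. intros.
        apply contP_y. apply Rgt_not_eq, HDx.
      + apply (RInt_correct (V:=R_CompleteNormedModule)). apply exR_cont. intros.
        apply contQ_y. apply Rgt_not_eq, HDx.
    - apply (is_RInt_plus (V:=R_NormedModule)).
      + apply (RInt_correct (V:=R_CompleteNormedModule)). apply exR_cont. intros.
        apply contP_y. apply Rgt_not_eq, DD_pos. rewrite cos_0; lra.
      + apply (RInt_correct (V:=R_CompleteNormedModule)). apply w_ex; auto. }
  assert (B2 : Cmod (Er lam Y x, Ei lam Y x) <= x * (exp (- lam * Y) / sh Y)).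
  { rewrite <- HnC.
    apply (norm_RInt_le (V:=C_R_NormedModule) (fun t => (P lam t Y, Q lam t Y))
      (fun _ => exp (- lam * Y) / sh Y) 0 x).
    - lra.
    - intros t Ht. assert (HD : 0 < DD t Y) by (rewrite DD_eq; pose proof (pow2_ge_0 (cos t)); nra).
      rewrite HnC, normPQ by auto.
      pose proof (exp_pos (- lam * Y)).
      unfold Rdiv. apply Rmult_le_compat_l. lra.
      apply Rinv_le_contravar. auto.
      rewrite <- (sqrt_pow2 (sh Y)) by lra. apply sqrt_le_1. nra. lra.
      rewrite DD_eq. pose proof (pow2_ge_0 (cos t)). lra.
    - apply (is_RInt_fct_extend_pair (U:=R_NormedModule) (V:=R_NormedModule)).
      + apply (RInt_correct (V:=R_CompleteNormedModule)). apply exR_cont. intros.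
        apply contP_t. apply DD_Y; lra.
      + apply (RInt_correct (V:=R_CompleteNormedModule)). apply exR_cont. intros.
        apply contQ_t. apply DD_Y; lra.
    - replace (x * (exp (- lam * Y) / sh Y)) with (scal (x - 0) (exp (- lam * Y) / sh Y)).
      apply (is_RInt_const (V:=R_NormedModule)).
      unfold scal; simpl; unfold mult; simpl. ring. }
  assert (B3 : Phr lam Y 0 <= / lam).
  { unfold Phr. apply Rle_trans with (RInt (fun s => exp (- lam * s)) 0 Y).
    - apply RInt_le. lra. apply exR_cont. intros. apply contP_y. apply Rgt_not_eq, DD_pos. rewrite cos_0; lra.
      eexists; apply exp_int; lra.
      intros v _. rewrite P_0y. pose proof (ch_ge1 v). pose proof (exp_pos (- lam * v)).
      unfold Rdiv. rewrite <- (Rmult_1_r (exp (- lam * v))) at 2. apply Rmult_le_compat_l. lra.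
      apply Rle_trans with (/ 1). apply Rinv_le_contravar; lra. rewrite Rinv_1; lra.
    - rewrite (is_RInt_unique _ _ _ _ (exp_int lam 0 Y ltac:(lra))).
      rewrite Rmult_0_r, exp_0. pose proof (exp_pos (- lam * Y)).
      unfold Rdiv. rewrite Rmult_minus_distr_r. 
      assert (0 < exp (- lam * Y) * / lam) by (apply Rmult_lt_0_compat; auto; apply Rinv_0_lt_compat; lra).
      lra. }
  set (T := exp (- lam * (Y + 1)) * ((1 - c ^ 2) / (2 * (Y + 1 + 1) ^ 3))).
  assert (HT : T <= RInt (w lam c) Y (Y + 1)).
  { replace T with (RInt (fun _ => T) Y (Y + 1)).
    2:{ rewrite RInt_const. unfold scal; simpl; unfold mult; simpl. ring. }
    apply RInt_le. lra. apply exR_cont; intros; apply continuous_const.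
    apply w_ex; auto.
    intros v Hv. unfold T, w, gC, fM.
    pose proof (phi_low c (Y + 1) Hc Hc1 ltac:(lra)).
    pose proof (phi_mono c v (Y + 1) Hc Hc1 ltac:(lra)).
    assert (0 <= (1 - c ^ 2) / (2 * (Y + 1 + 1) ^ 3)).
    { apply Rmult_le_pos. lra. apply Rlt_le, Rinv_0_lt_compat. apply Rmult_lt_0_compat. lra. apply pow_lt. lra. }
    assert (exp (- lam * (Y + 1)) <= exp (- lam * v)).
    { apply exp_le_3 || (destruct (Req_dec v (Y+1)); [subst; lra| apply Rlt_le, exp_increasing; nra]). }
    unfold Rdiv. rewrite <- Rmult_minus_distr_l.
    apply Rmult_le_compat; auto. apply Rlt_le, exp_pos.
    unfold Rdiv in *. lra. }
  assert (HYb : x * (exp (- lam * Y) / sh Y) < T).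
  { unfold T. rewrite <- Hsc.
    replace (- lam * (Y + 1)) with (- lam * Y + - lam) by ring. rewrite exp_plus.
    set (e := exp (- lam * Y)). set (el := exp (- lam)). set (s2 := sin x ^ 2).
    assert (He : 0 < e) by apply exp_pos. assert (Hel : 0 < el) by apply exp_pos.
    assert (Hs2 : 0 < s2) by (unfold s2; nra).
    assert (HKe : K * (el * s2) = 2 * x) by (unfold K; fold el s2; field; lra).
    replace (Y + 1 + 1) with (Y + 2) by ring.
    assert (HY3 : 0 < (Y + 2) ^ 3) by (apply pow_lt; lra).
    assert (H2 : 2 * x * (Y + 2) ^ 3 < el * s2 * sh Y).
    { rewrite <- HKe. assert (0 < el * s2) by nra.
      replace (K * (el * s2) * (Y + 2) ^ 3) with ((el * s2) * (K * (Y + 2) ^ 3)) by ring.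
      apply Rmult_lt_compat_l; auto. }
    replace (x * (e / sh Y)) with (e * (2 * x * (Y + 2) ^ 3) / (sh Y * (2 * (Y + 2) ^ 3)))
      by (field; lra).
    replace (e * el * (s2 / (2 * (Y + 2) ^ 3))) with (e * (el * s2 * sh Y) / (sh Y * (2 * (Y + 2) ^ 3)))
      by (field; lra).
    unfold Rdiv. apply Rmult_lt_compat_r. apply Rinv_0_lt_compat. nra.
    apply Rmult_lt_compat_l; auto. }
  assert (HM : RInt (w lam c) 0 (Y + 1) <= M (lam * c) - M lam)
    by (apply W_le_M; auto; lra).
  assert (HCh : RInt (w lam c) 0 (Y + 1) = RInt (w lam c) 0 Y + RInt (w lam c) Y (Y + 1)).
  { rewrite <- (RInt_Chasles (w lam c) 0 Y (Y + 1)) by (apply w_ex; auto). reflexivity. }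
  rewrite HJ.
  assert (Heq : Cminus (Phi lam Y x + Er lam Y x, Phr lam Y 0 - Phr lam Y x + Ei lam Y x)
      (Ci * RtoC (/ lam))%C =
    Cplus (Cplus (Phi lam Y x, - Phr lam Y x) (Er lam Y x, Ei lam Y x)) (0, Phr lam Y 0 - / lam)).
  { unfold Cminus, Cplus, Copp, Cmult, Ci, RtoC; simpl. f_equal; ring. }
  rewrite Heq.
  assert (E4 : Cmod (Phi lam Y x, - Phr lam Y x) = Cmod (Phr lam Y x, Phi lam Y x)).
  { unfold Cmod; simpl. f_equal. ring. }
  assert (E5 : Cmod (0, Phr lam Y 0 - / lam) = / lam - Phr lam Y 0).
  { unfold Cmod; simpl. replace (0 * (0 * 1) + (Phr lam Y 0 - / lam) * ((Phr lam Y 0 - / lam) * 1))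
      with (Rsqr (Phr lam Y 0 - / lam)) by (unfold Rsqr; ring).
    rewrite sqrt_Rsqr_abs. rewrite Rabs_left1 by lra. ring. }
  eapply Rle_lt_trans. apply Cmod_triangle.
  eapply Rle_lt_trans. apply Rplus_le_compat_r. apply Cmod_triangle.
  rewrite E4, E5. fold c. lra.
Qed.
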